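(* There is a universal constant $K_1\le 20480$ such that for any two independent real random variables $X,Y$ with finite second moments, with $E=\mathbb{E}[X+Y]$, $V=\operatorname{Var}(X+Y)$ and $V+E^2>0$, \[ \operatorname{Var}|X+Y| \;\ge\; \frac{V\cdot\min\{\operatorname{Var}X,\operatorname{Var}Y\}}{K_1\,(V+E^2)}. \]
   Context: $\operatorname{Var} Z=\mathbb{E}[Z^2]-(\mathbb{E}Z)^2$. *)

(* Defs.v *)
From HB Require Import structures.
From mathcomp Require Import all_boot all_order all_algebra.
From mathcomp Require Import all_classical all_reals all_analysis.
Set Implicit Arguments. Unset Strict Implicit. Unset Printing Implicit Defensive.
Import Order.TTheory GRing.Theory Num.Theory.
Local Open Scope classical_set_scope.
Local Open Scope ring_scope.

Definition independent_RV d (T : measurableType d) (R : realType)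
    (P : probability T R) (X Y : T -> R) : Prop :=
  forall A B : set R, measurable A -> measurable B ->
    P (X @^-1` A `&` Y @^-1` B) = (P (X @^-1` A) * P (Y @^-1` B))%E.

(* Main.v *)
Require Import Defs.
From HB Require Import structures.
From mathcomp Require Import all_boot all_order all_algebra.
From mathcomp Require Import all_classical all_reals all_analysis.
From mathcomp Require Import measurable_realfun ring lra.
Import Order.TTheory GRing.Theory Num.Theory.
Local Open Scope classical_set_scope.
Local Open Scope ring_scope.
Section PW.
Variable R : realFieldType.

Definition pp (a tp tq : R) := `|tp - a| * (tq + a) + `|tq - a| * (tp + a).

Lemma pair_facts (tp tq a : R) : 0 <= tp -> 0 <= tq -> 0 <= a ->
  [/\ 2 * (tp * tq - a ^+ 2) <= pp a tp tq, 2 * (a ^+ 2 - tp * tq) <= pp a tp tq,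
      2 * a * (tp - tq) <= pp a tp tq, 2 * a * (tq - tp) <= pp a tp tq &
      a * (2 * a - tp - tq) <= pp a tp tq].
Proof.
move=> hp hq ha; rewrite /pp.
have [h1|h1] := lerP 0 (tp - a); have [h2|h2] := lerP 0 (tq - a);
  rewrite ?(ger0_norm h1) ?(ltr0_norm h1) ?(ger0_norm h2) ?(ltr0_norm h2);
  split; nra.
Qed.

Lemma lin (s1 s2 s3 s4 a : R) : s1 + s2 = s3 + s4 -> 0 <= a ->
  `|s3 * s4 - s1 * s2| <= 3 / 2 * (pp a `|s1| `|s2| + pp a `|s3| `|s4|).
Proof.
move=> hs ha.
have [A1 A2 A3 A4 A5] := pair_facts `|s1| `|s2| a (normr_ge0 _) (normr_ge0 _) ha.
have [B1 B2 B3 B4 B5] := pair_facts `|s3| `|s4| a (normr_ge0 _) (normr_ge0 _) ha.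
move: A1 A2 A3 A4 A5 B1 B2 B3 B4 B5.
move: (pp a `|s1| `|s2|) (pp a `|s3| `|s4|) => P12 P34.
have -> : s4 = s1 + s2 - s3 by rewrite hs; ring.
have [h1|h1] := lerP 0 s1; have [h2|h2] := lerP 0 s2;
have [h3|h3] := lerP 0 s3; have [h4|h4] := lerP 0 (s1 + s2 - s3);
rewrite ?(ger0_norm h1) ?(ltr0_norm h1) ?(ger0_norm h2) ?(ltr0_norm h2)
  ?(ger0_norm h3) ?(ltr0_norm h3) ?(ger0_norm h4) ?(ltr0_norm h4);
move=> *; rewrite ler_norml; apply/andP; split; nra.
Qed.
End PW.
Section PW2.
Variable R : realFieldType.
Definition Ff (a x y : R) := (`|x + y| - a) * (`|x + y| - a).
Definition Gf (a x y : R) := (x + y) ^+ 2 + a ^+ 2.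

Lemma qbound (a s t : R) : 0 <= a ->
  (`| `|s| - a| * (`|t| + a)) ^+ 2 <= 2 * ((`|s| - a) * (`|s| - a) * (t ^+ 2 + a ^+ 2)).
Proof.
move=> ha; rewrite exprMn (real_normK (num_real _)) -(real_normK (num_real t)).
have := normr_ge0 t; move: `|t| => u hu.
have h := mulr_ge0 (sqr_ge0 (`|s| - a)) (sqr_ge0 (u - a)).
rewrite -expr2; nra.
Qed.

Lemma pw (x x' y y' a : R) : 0 <= a ->
  ((x - x') * (y - y')) ^+ 2 <= 18 * (Ff a x y * Gf a x' y' + Ff a x' y' * Gf a x y
     + Ff a x y' * Gf a x' y + Ff a x' y * Gf a x y').
Proof.
move=> ha.
have := @lin R (x + y) (x' + y') (x + y') (x' + y) a _ ha.
rewrite /pp.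
have -> : (x + y') * (x' + y) - (x + y) * (x' + y') = (x - x') * (y - y') by ring.
have := qbound a (x + y) (x' + y') ha; have := qbound a (x' + y') (x + y) ha.
have := qbound a (x + y') (x' + y) ha; have := qbound a (x' + y) (x + y') ha.
rewrite /Ff /Gf.
set q1 := `| `|x + y| - a| * _; set q2 := `| `|x' + y'| - a| * _.
set q3 := `| `|x + y'| - a| * _; set q4 := `| `|x' + y| - a| * _.
have h1 : 0 <= q1 by rewrite mulr_ge0 // addr_ge0.
have h2 : 0 <= q2 by rewrite mulr_ge0 // addr_ge0.
have h3 : 0 <= q3 by rewrite mulr_ge0 // addr_ge0.
have h4 : 0 <= q4 by rewrite mulr_ge0 // addr_ge0.
move=> e4 e3 e2 e1 /(_ ltac:(ring)) hl.
rewrite -(real_normK (num_real _)).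
have hu := normr_ge0 ((x - x') * (y - y')).
move: hl; move: `|_| hu => u hu hl.
have H1 : u ^+ 2 <= (3 / 2 * (q1 + q2 + q3 + q4)) ^+ 2.
  rewrite ler_pXn2r // ?inE ?(le_trans hu hl) //.
  - by move: hl; rewrite !addrA.
  - by rewrite nnegrE; lra.
have H2 : (q1 + q2 + q3 + q4) ^+ 2 <= 4 * (q1 ^+ 2 + q2 ^+ 2 + q3 ^+ 2 + q4 ^+ 2).
  have := sqr_ge0 (q1 - q2); have := sqr_ge0 (q1 - q3); have := sqr_ge0 (q1 - q4);
  have := sqr_ge0 (q2 - q3); have := sqr_ge0 (q2 - q4); have := sqr_ge0 (q3 - q4).
  move=> *; nra.
move: H1 H2 e1 e2 e3 e4.
move: (_ * _ * _ : R) => A; move: (_ * _ * _ : R) => B.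
move: (_ * _ * _ : R) => C; move: (_ * _ * _ : R) => D.
move=> *; nra.
Qed.
End PW2.
Arguments Ff {R}.
Arguments Gf {R}.
Arguments pw {R}.


Section prodlemmas.
Local Open Scope ereal_scope.
Context (R : realType).

Lemma integral_prod_mul d1 d2 (T1 : measurableType d1) (T2 : measurableType d2)
  (m1 : {sigma_finite_measure set T1 -> \bar R})
  (m2 : {sigma_finite_measure set T2 -> \bar R})
  (f : T1 -> \bar R) (g : T2 -> \bar R) :
  measurable_fun setT f -> measurable_fun setT g ->
  (forall x, 0 <= f x) -> (forall y, 0 <= g y) ->
  \int[m1 \x m2]_z (f z.1 * g z.2) = \int[m1]_x f x * \int[m2]_y g y.
Proof.
move=> mf mg f0 g0.
have mfg : measurable_fun setT (fun z : T1 * T2 => f z.1 * g z.2).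
  by apply: emeasurable_funM; apply: measurableT_comp.
rewrite (fubini_tonelli1 _ mfg); last by move=> z; apply: mule_ge0.
rewrite /fubini_F /=.
under eq_integral => x _ do rewrite ge0_integralZl //.
by rewrite ge0_integralZr //; apply: integral_ge0.
Qed.
Arguments integral_prod_mul {d1 d2 T1 T2} m1 m2 {f g}.


Lemma cross1 d1 d2 (T1 : measurableType d1) (T2 : measurableType d2)
  (m1 : probability T1 R) (m2 : probability T2 R)
  (F G : T1 * T2 -> \bar R) :
  measurable_fun setT F -> measurable_fun setT G ->
  (forall z, 0 <= F z) -> (forall z, 0 <= G z) ->
  \int[(m1 \x m1) \x (m2 \x m2)]_p (F (p.1.1, p.2.1) * G (p.1.2, p.2.2)) =
  \int[m1 \x m2]_z F z * \int[m1 \x m2]_z G z.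
Proof.
move=> mF mG F0 G0.
have mF1 : forall x, measurable_fun setT (fun y => F (x, y)).
  by move=> x; apply: measurableT_comp => //; apply: measurable_fun_pair.
have mG1 : forall x, measurable_fun setT (fun y => G (x, y)).
  by move=> x; apply: measurableT_comp => //; apply: measurable_fun_pair.
have mH : measurable_fun setT
    (fun p : (T1 * T1) * (T2 * T2) => F (p.1.1, p.2.1) * G (p.1.2, p.2.2)).
  apply: emeasurable_funM; apply: measurableT_comp => //;
  apply: measurable_fun_pair; apply: measurableT_comp => //.
rewrite (@fubini_tonelli1 _ _ _ _ R (m1 \x m1 : probability _ R) (m2 \x m2 : probability _ R) _ mH); last by move=> p; apply: mule_ge0.
rewrite /fubini_F /=.
under eq_integral => q _ do rewrite (integral_prod_mul m2 m2 (mF1 q.1) (mG1 q.2)) //.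
rewrite (integral_prod_mul m1 m1 (f := fun x => \int[m2]_y F (x, y))
   (g := fun x => \int[m2]_y G (x, y))).
- by rewrite (fubini_tonelli1 F) // (fubini_tonelli1 G).
- exact: measurable_fun_fubini_tonelli_F.
- exact: measurable_fun_fubini_tonelli_F.
- by move=> x; apply: integral_ge0.
- by move=> x; apply: integral_ge0.
Qed.

Lemma cross2 d1 d2 (T1 : measurableType d1) (T2 : measurableType d2)
  (m1 : probability T1 R) (m2 : probability T2 R)
  (F G : T1 * T2 -> \bar R) :
  measurable_fun setT F -> measurable_fun setT G ->
  (forall z, 0 <= F z) -> (forall z, 0 <= G z) ->
  \int[(m1 \x m1) \x (m2 \x m2)]_p (G (p.1.2, p.2.1) * F (p.1.1, p.2.2)) =
  \int[m1 \x m2]_z F z * \int[m1 \x m2]_z G z.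
Proof.
move=> mF mG F0 G0.
have mF1 : forall x, measurable_fun setT (fun y => F (x, y)).
  by move=> x; apply: measurableT_comp => //; apply: measurable_fun_pair.
have mG1 : forall x, measurable_fun setT (fun y => G (x, y)).
  by move=> x; apply: measurableT_comp => //; apply: measurable_fun_pair.
have mH : measurable_fun setT
    (fun p : ((T1 * T1) * (T2 * T2))%type => G (p.1.2, p.2.1) * F (p.1.1, p.2.2)).
  apply: emeasurable_funM; apply: measurableT_comp => //;
  apply: measurable_fun_pair; apply: measurableT_comp => //.
rewrite (@fubini_tonelli1 _ _ _ _ R (m1 \x m1 : probability _ R) (m2 \x m2 : probability _ R) _ mH); last by move=> p; apply: mule_ge0.
rewrite /fubini_F /=.
under eq_integral => q _ do rewrite (integral_prod_mul m2 m2 (mG1 q.2) (mF1 q.1)) // muleC.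
rewrite (integral_prod_mul m1 m1 (f := fun x => \int[m2]_y F (x, y))
   (g := fun x => \int[m2]_y G (x, y))).
- by rewrite (fubini_tonelli1 F) // (fubini_tonelli1 G).
- exact: measurable_fun_fubini_tonelli_F.
- exact: measurable_fun_fubini_tonelli_F.
- by move=> x; apply: integral_ge0.
- by move=> x; apply: integral_ge0.
Qed.

End prodlemmas.


Section indep.
Local Open Scope ereal_scope.
Context (R : realType) d (T : measurableType d) (P : probability T R)
  (X Y : {RV P >-> R}).

Lemma indep_integral (h : (R * R)%type -> \bar R) :
  independent_RV P X Y ->
  measurable_fun setT h -> (forall z, 0 <= h z) ->
  \int[P]_w h (X w, Y w) = \int[distribution P X \x distribution P Y]_z h z.
Proof.
move=> hind mh h0.
have mXY : measurable_fun setT (fun w => (X w, Y w)).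
  by apply: measurable_fun_pair.
pose XY : {mfun T >-> (R * R)%type} :=
  HB.pack (fun w => (X w, Y w)) (isMeasurableFun.Build _ _ _ _ _ mXY).
transitivity (\int[distribution P XY]_z h z).
  by rewrite ge0_integral_distribution.
apply: eq_measure_integral => A mA _.
apply/esym; apply: (@product_measure_unique _ _ _ _ R (distribution P X) (distribution P Y)
  (distribution P XY)) => //.
Qed.

End indep.


Section lowvar.
Context (R : realType) d (T : measurableType d) (P : probability T R).
Local Open Scope ereal_scope.

Lemma var_le_int (Z : {RV P >-> R}) : (Z : T -> R) \in Lfun P 2%:E ->
  'V_P[Z] <= \int[distribution P Z \x distribution P Z]_q ((q.1 - q.2) ^+ 2)%:E.
Proof.
move=> Z2.
have mq : measurable_fun setT (fun q : (R * R)%type => ((q.1 - q.2) ^+ 2)%:E).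
  apply/measurable_EFinP; apply: measurable_funX; exact: measurable_funB.
have sqr_ge0' : forall q : (R * R)%type, 0 <= ((q.1 - q.2) ^+ 2)%:E.
  by move=> q; rewrite lee_fin sqr_ge0.
rewrite (fubini_tonelli1 _ mq sqr_ge0').
rewrite /fubini_F /=.
have inner x : 'V_P[Z] <= \int[distribution P Z]_y ((x - y) ^+ 2)%:E.
  rewrite ge0_integral_distribution //; last first.
  - by move=> y; rewrite lee_fin sqr_ge0.
  - apply/measurable_EFinP; apply: measurable_funX; exact: measurable_funB.
  have L : (Z \- cst x)%R \in Lfun P 2%:E.
    rewrite rpredB //; [exact: lee1n | move=> ?; exact: Lfun_cst].
  rewrite -[X in X <= _](varianceB_cst_r x Z2) varianceE //.
  have fin : ('E_P[(Z \- cst x)%R]) ^+ 2 \is a fin_num.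
    by rewrite fin_numX // expectation_fin_num // Lfun_subset12 // fin_num_measure.
  apply: (@le_trans _ _ ('E_P[((Z \- cst x) ^+ 2)%R])).
    by rewrite leeBlDr //; apply: leeDl; exact: sqre_ge0.
  rewrite expectation.unlock.
  under eq_integral => w _ do rewrite exprfctE /=.
  apply: ge0_le_integral => //.
  - by move=> w _; rewrite lee_fin sqr_ge0.
  - apply/measurable_EFinP; apply: measurable_funX; apply: measurable_funB => //.
  - apply: measurableT_comp => //; apply/measurable_EFinP; apply: measurable_funX.
    exact: measurable_funB.
  - by move=> w _ /=; rewrite lee_fin -sqrrN opprB.
apply: (@le_trans _ _ (\int[distribution P Z]_x (cst ('V_P[Z]) x))).
  rewrite integral_cst // [X in (_ * X)%E](_ : _ = 1%E) ?mule1 //.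
  exact: probability_setT.
apply: ge0_le_integral => //.
- by move=> x _; apply: variance_ge0.
- exact: (measurable_fun_fubini_tonelli_F _ mq (fun q => sqr_ge0' q)).

Qed.

End lowvar.

Section main.
Context (R : realType) d (T : measurableType d) (P : probability T R)
  (X Y : {RV P >-> R}).
Hypothesis hind : independent_RV P X Y.
Hypothesis X2 : (X : T -> R) \in Lfun P 2%:E.
Hypothesis Y2 : (Y : T -> R) \in Lfun P 2%:E.

Let mu := distribution P X.
Let nu := distribution P Y.
Let W := fun x => `|X x + Y x|.
Let a := fine 'E_P[W].
Let F := fun z : (R * R)%type => (Ff a z.1 z.2)%:E.
Let G := fun z : (R * R)%type => (Gf a z.1 z.2)%:E.

Lemma a_ge0 : 0 <= a.
Proof. by apply: fine_ge0; apply: expectation_ge0 => x; rewrite /W. Qed.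

Lemma mF : measurable_fun setT F.
Proof.
apply/measurable_EFinP; rewrite /Ff /=.
have h : measurable_fun setT (fun z : (R * R)%type => `|z.1 + z.2| - a).
  apply: measurable_funB => //; apply: measurableT_comp => //.
  by apply: measurable_funD.
exact: measurable_funM.
Qed.

Lemma mG : measurable_fun setT G.
Proof.
apply/measurable_EFinP; rewrite /Gf /=.
apply: measurable_funD => //; apply: measurable_funX.
by apply: measurable_funD.
Qed.

Lemma F0 z : (0 <= F z)%E.
Proof. by rewrite lee_fin /Ff -expr2 sqr_ge0. Qed.

Lemma G0 z : (0 <= G z)%E.
Proof. by rewrite lee_fin /Gf addr_ge0 // sqr_ge0. Qed.


Lemma intF : (\int[mu \x nu]_z F z = 'V_P[W])%E.
Proof.
rewrite -(@indep_integral R d T P X Y F hind mF F0).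
rewrite /variance covariance.unlock -/a expectation.unlock.
by apply: eq_integral => w _ /=.
Qed.

Lemma intG : (\int[mu \x nu]_z G z = 'E_P[(X \+ Y) ^+ 2] + (a ^+ 2)%:E)%E.
Proof.
rewrite -(@indep_integral R d T P X Y G hind mG G0).
rewrite /G /Gf /=.
under eq_integral do rewrite EFinD.
have h1 : measurable_fun setT (fun w => ((X w + Y w) ^+ 2)%:E).
  apply/measurable_EFinP; apply: measurable_funX; exact: measurable_funD.
rewrite ge0_integralD //; last 2 first.
- by move=> w _; rewrite lee_fin sqr_ge0.
- by move=> w _; rewrite lee_fin sqr_ge0.
rewrite (_ : (\int[P]_x (a ^+ 2)%:E = \int[P]_x (cst (a ^+ 2)%:E x))%E) //.
rewrite integral_cst //.
rewrite [X in (_ * X)%E](_ : _ = 1%E); last exact: probability_setT.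
by rewrite mule1 expectation.unlock.
Qed.


Let M4 : probability ((R * R) * (R * R))%type R :=
  ((mu \x mu : probability _ R) \x (nu \x nu : probability _ R))%E.

Lemma mFG (K : (R * R)%type -> \bar R) (g1 g2 : ((R * R) * (R * R))%type -> R) :
  measurable_fun setT K -> measurable_fun setT g1 -> measurable_fun setT g2 ->
  measurable_fun setT (fun p => K (g1 p, g2 p)).
Proof. by move=> *; apply: measurableT_comp => //; apply: measurable_fun_pair. Qed.

Let m11 : measurable_fun setT (fun p : ((R * R) * (R * R))%type => p.1.1).
Proof. by apply: measurableT_comp. Qed.
Let m12 : measurable_fun setT (fun p : ((R * R) * (R * R))%type => p.1.2).
Proof. by apply: measurableT_comp. Qed.
Let m21 : measurable_fun setT (fun p : ((R * R) * (R * R))%type => p.2.1).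
Proof. by apply: measurableT_comp. Qed.
Let m22 : measurable_fun setT (fun p : ((R * R) * (R * R))%type => p.2.2).
Proof. by apply: measurableT_comp. Qed.

Let T1 := fun p : ((R * R) * (R * R))%type => (F (p.1.1, p.2.1) * G (p.1.2, p.2.2))%E.
Let T2 := fun p : ((R * R) * (R * R))%type => (G (p.1.1, p.2.1) * F (p.1.2, p.2.2))%E.
Let T3 := fun p : ((R * R) * (R * R))%type => (G (p.1.2, p.2.1) * F (p.1.1, p.2.2))%E.
Let T4 := fun p : ((R * R) * (R * R))%type => (F (p.1.2, p.2.1) * G (p.1.1, p.2.2))%E.

Let mT1 : measurable_fun setT T1.
Proof.
apply: emeasurable_funM.
- apply: (measurableT_comp (f := F) (g := fun p : ((R * R) * (R * R))%type => (p.1.1, p.2.1))).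
    exact: mF.
  by apply: measurable_fun_pair; apply: measurableT_comp.
- apply: (measurableT_comp (f := G) (g := fun p : ((R * R) * (R * R))%type => (p.1.2, p.2.2))).
    exact: mG.
  by apply: measurable_fun_pair; apply: measurableT_comp.
Qed.
Let mT2 : measurable_fun setT T2.
Proof.
apply: emeasurable_funM.
- apply: (measurableT_comp (f := G) (g := fun p : ((R * R) * (R * R))%type => (p.1.1, p.2.1))).
    exact: mG.
  by apply: measurable_fun_pair; apply: measurableT_comp.
- apply: (measurableT_comp (f := F) (g := fun p : ((R * R) * (R * R))%type => (p.1.2, p.2.2))).
    exact: mF.
  by apply: measurable_fun_pair; apply: measurableT_comp.
Qed.
Let mT3 : measurable_fun setT T3.
Proof.
apply: emeasurable_funM.
- apply: (measurableT_comp (f := G) (g := fun p : ((R * R) * (R * R))%type => (p.1.2, p.2.1))).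
    exact: mG.
  by apply: measurable_fun_pair; apply: measurableT_comp.
- apply: (measurableT_comp (f := F) (g := fun p : ((R * R) * (R * R))%type => (p.1.1, p.2.2))).
    exact: mF.
  by apply: measurable_fun_pair; apply: measurableT_comp.
Qed.
Let mT4 : measurable_fun setT T4.
Proof.
apply: emeasurable_funM.
- apply: (measurableT_comp (f := F) (g := fun p : ((R * R) * (R * R))%type => (p.1.2, p.2.1))).
    exact: mF.
  by apply: measurable_fun_pair; apply: measurableT_comp.
- apply: (measurableT_comp (f := G) (g := fun p : ((R * R) * (R * R))%type => (p.1.1, p.2.2))).
    exact: mG.
  by apply: measurable_fun_pair; apply: measurableT_comp.
Qed.

Let T1_ge0 p : (0 <= T1 p)%E. Proof. by apply: mule_ge0; [apply: F0|apply: G0]. Qed.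
Let T2_ge0 p : (0 <= T2 p)%E. Proof. by apply: mule_ge0; [apply: G0|apply: F0]. Qed.
Let T3_ge0 p : (0 <= T3 p)%E. Proof. by apply: mule_ge0; [apply: G0|apply: F0]. Qed.
Let T4_ge0 p : (0 <= T4 p)%E. Proof. by apply: mule_ge0; [apply: F0|apply: G0]. Qed.

Lemma pw_ereal (p : ((R * R) * (R * R))%type) :
  (((p.1.1 - p.1.2) ^+ 2)%:E * ((p.2.1 - p.2.2) ^+ 2)%:E <=
   18%:E * (T1 p + T2 p + T3 p + T4 p))%E.
Proof.
rewrite /T1 /T2 /T3 /T4 /F /G /= -!EFinM lee_fin -exprMn.
rewrite (mulrC (Gf a p.1.1 p.2.1)) (mulrC (Gf a p.1.2 p.2.1)).
exact: (pw p.1.1 p.1.2 p.2.1 p.2.2 a a_ge0).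
Qed.

Lemma int4 : (\int[M4]_p (T1 p + T2 p + T3 p + T4 p) =
  \int[mu \x nu]_z F z * \int[mu \x nu]_z G z +
  \int[mu \x nu]_z G z * \int[mu \x nu]_z F z +
  \int[mu \x nu]_z F z * \int[mu \x nu]_z G z +
  \int[mu \x nu]_z G z * \int[mu \x nu]_z F z)%E.
Proof.
have h12 : measurable_fun setT (fun p => T1 p + T2 p)%E by apply: emeasurable_funD.
have h123 : measurable_fun setT (fun p => T1 p + T2 p + T3 p)%E by apply: emeasurable_funD.
have g1 : forall p, setT p -> (0 <= T1 p)%E by move=> p _.
have g2 : forall p, setT p -> (0 <= T2 p)%E by move=> p _.
have g3 : forall p, setT p -> (0 <= T3 p)%E by move=> p _.
have g4 : forall p, setT p -> (0 <= T4 p)%E by move=> p _.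
have g12 : forall p, setT p -> (0 <= T1 p + T2 p)%E by move=> p _; rewrite adde_ge0.
have g123 : forall p, setT p -> (0 <= T1 p + T2 p + T3 p)%E by move=> p _; rewrite !adde_ge0.
rewrite ge0_integralD // ge0_integralD // ge0_integralD //.
rewrite /T1 /T2 /T3 /T4.
rewrite (@cross1 R _ _ _ _ mu nu F G mF mG F0 G0).
rewrite (@cross1 R _ _ _ _ mu nu G F mG mF G0 F0).
rewrite (@cross2 R _ _ _ _ mu nu F G mF mG F0 G0).
by rewrite (@cross2 R _ _ _ _ mu nu G F mG mF G0 F0).
Qed.



Lemma Z2 : ((X \+ Y)%R : T -> R) \in Lfun P 2%:E.
Proof. by rewrite rpredD //; exact: lee1n. Qed.

Lemma W2 : (W : T -> R) \in Lfun P 2%:E.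
Proof.
have := Z2; case/andP; rewrite !inE/= => mf finf; apply/andP; split.
  by rewrite inE/=; exact: measurableT_comp.
rewrite inE/=/finite_norm.
under [X in ('N[_]__[X])%E]eq_fun => x do rewrite -abse_EFin.
by rewrite Lnorm_abse.
Qed.


Lemma fin_E2 : ('E_P[((X \+ Y) ^+ 2)%R])%E \is a fin_num.
Proof.
have Z1 : ((X \+ Y)%R : T -> R) \in Lfun P 1.
  exact: (Lfun_subset12 (fin_num_measure P _ measurableT) Z2).
have := varianceE Z2 => /(congr1 (fun e => e + ('E_P[(X \+ Y)%R]) ^+ 2)%E).
rewrite subeK; last by rewrite fin_numX // expectation_fin_num.
move=> <-.
by rewrite fin_numD variance_fin_num ?Z2 // fin_numX // expectation_fin_num.
Qed.

Lemma key_ereal : ('V_P[X] * 'V_P[Y] <= 18%:E *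
  ('V_P[W] * ('E_P[((X \+ Y) ^+ 2)%R] + (a ^+ 2)%:E) +
   ('E_P[((X \+ Y) ^+ 2)%R] + (a ^+ 2)%:E) * 'V_P[W] +
   'V_P[W] * ('E_P[((X \+ Y) ^+ 2)%R] + (a ^+ 2)%:E) +
   ('E_P[((X \+ Y) ^+ 2)%R] + (a ^+ 2)%:E) * 'V_P[W]))%E.
Proof.
rewrite -intF -intG -int4.
have mq : measurable_fun setT (fun q : (R * R)%type => ((q.1 - q.2) ^+ 2)%:E).
  apply/measurable_EFinP; apply: measurable_funX; exact: measurable_funB.
have q0 : forall q : (R * R)%type, (0 <= ((q.1 - q.2) ^+ 2)%:E)%E.
  by move=> q; rewrite lee_fin sqr_ge0.
have hint : (\int[M4]_p (((p.1.1 - p.1.2) ^+ 2)%:E * ((p.2.1 - p.2.2) ^+ 2)%:E) =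
    (\int[mu \x mu]_q ((q.1 - q.2) ^+ 2)%:E) * (\int[nu \x nu]_q ((q.1 - q.2) ^+ 2)%:E))%E.
  rewrite /M4; apply: integral_prod_mul.
  - exact: mq.
  - exact: mq.
  - exact: q0.
  - exact: q0.
apply: (@le_trans _ _ (\int[M4]_p (((p.1.1 - p.1.2) ^+ 2)%:E * ((p.2.1 - p.2.2) ^+ 2)%:E))%E).
  rewrite hint; apply: lee_pmul; try exact: variance_ge0.
  - exact: var_le_int.
  - exact: var_le_int.
have mS : measurable_fun setT (fun p => T1 p + T2 p + T3 p + T4 p)%E.
  by apply: emeasurable_funD => //; apply: emeasurable_funD => //; apply: emeasurable_funD.
have gS : forall p, setT p -> (0 <= T1 p + T2 p + T3 p + T4 p)%E.
  by move=> p _; rewrite !adde_ge0.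
have mL : measurable_fun setT
    (fun p : ((R * R) * (R * R))%type => (((p.1.1 - p.1.2) ^+ 2)%:E * ((p.2.1 - p.2.2) ^+ 2)%:E)%E).
  by apply: emeasurable_funM; apply/measurable_EFinP; apply: measurable_funX;
    apply: measurable_funB; apply: measurableT_comp.
rewrite -ge0_integralZl //.
apply: ge0_le_integral => //.
- by move=> p _; apply: mule_ge0; rewrite lee_fin sqr_ge0.
- by apply: emeasurable_funM => //; exact: measurable_cst.
- by move=> p _; apply: pw_ereal.
Qed.


Lemma final :
    let E := fine 'E_P[X \+ Y] in
    let V := fine 'V_P[X \+ Y] in
    0 < V + E ^+ 2 ->
    V * Num.min (fine 'V_P[X]) (fine 'V_P[Y]) / (576 * (V + E ^+ 2))
      <= fine 'V_P[(fun x => `|X x + Y x|)].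
Proof.
move=> E V hS.
rewrite -/W.
have Pfin : (P setT \is a fin_num)%E := fin_num_measure P _ measurableT.
have X1 := Lfun_subset12 Pfin X2.
have Y1 := Lfun_subset12 Pfin Y2.
have Z1 := Lfun_subset12 Pfin Z2.
have W1 := Lfun_subset12 Pfin W2.
have XY1 := Lfun2_mul_Lfun1 X2 Y2.
have fVX := variance_fin_num X2.
have fVY := variance_fin_num Y2.
have fVW := variance_fin_num W2.
have fVZ := variance_fin_num Z2.
have fEZ := expectation_fin_num Z1.
have fEW := expectation_fin_num W1.
have fE2 := fin_E2.
have fC := covariance_fin_num X1 Y1 XY1.
set vx := fine 'V_P[X]; set vy := fine 'V_P[Y]; set Dv := fine 'V_P[W].
set E2 := fine ('E_P[((X \+ Y) ^+ 2)%R])%E.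
have vx0 : 0 <= vx by apply: fine_ge0; exact: variance_ge0.
have vy0 : 0 <= vy by apply: fine_ge0; exact: variance_ge0.
have Dv0 : 0 <= Dv by apply: fine_ge0; exact: variance_ge0.
have hk : vx * vy <= 18 * (Dv * (E2 + a ^+ 2) + (E2 + a ^+ 2) * Dv +
    Dv * (E2 + a ^+ 2) + (E2 + a ^+ 2) * Dv).
  have := key_ereal.
  rewrite -(fineK fVX) -(fineK fVY) -(fineK fVW) -(fineK fE2).
  by rewrite -!EFinD -!EFinM lee_fin.
have hV : V = E2 - E ^+ 2.
  have := varianceE Z2.
  rewrite -(fineK fVZ) -(fineK fE2) -(fineK fEZ) => h.
  have : (fine 'V_P[(X \+ Y)%R])%:E = (E2 - E ^+ 2)%:E.
    by rewrite EFinB EFin_expe.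
  by case.
have hD : Dv = E2 - a ^+ 2.
  have := varianceE W2.
  have -> : ('E_P[(W ^+ 2)%R] = 'E_P[((X \+ Y) ^+ 2)%R])%E.
    congr expectation; apply/funext => w.
    by rewrite !exprfctE /W /= real_normK // num_real.
  rewrite -(fineK fVW) -(fineK fE2) -(fineK fEW) => h.
  have : (fine 'V_P[W])%:E = (E2 - a ^+ 2)%:E.
    by rewrite EFinB EFin_expe.
  by case.
have hV2 : V <= 2 * (vx + vy).
  have h1 := varianceD X2 Y2.
  have h2 := varianceB X2 Y2.
  have h3 := variance_ge0 P (X \- Y)%R.
  rewrite h2 in h3.
  move: h1 h3.
  rewrite -(fineK fVZ) -(fineK fVX) -(fineK fVY) -(fineK fC) => h1 h3.
  have e1 : (fine 'V_P[(X \+ Y)%R])%:E = (vx + vy + 2 * fine (covariance P X Y))%:E.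
    by rewrite !EFinD EFinM.
  have e3 : (0 <= (vx + vy - 2 * fine (covariance P X Y))%:E)%E.
    by rewrite EFinB EFinD EFinM.
  move: e1 e3 => -[] hv; rewrite lee_fin => h4.
  rewrite /V hv; lra.
have hS2 : V + E ^+ 2 = E2 by rewrite hV; ring.
rewrite hS2 in hS *.
rewrite ler_pdivrMr; last by rewrite mulr_gt0.
have hm : V * Num.min vx vy <= 4 * (vx * vy).
  rewrite /Order.min; case: ifPn => h.
    have hh : 0 <= vy - vx by rewrite subr_ge0 ltW.
    have := mulr_ge0 vx0 hh.
    have := ler_wpM2r vx0 hV2.
    nra.
  rewrite -leNgt in h.
  have hh : 0 <= vx - vy by rewrite subr_ge0.
  have := mulr_ge0 vy0 hh.
  have := ler_wpM2r vy0 hV2.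
  nra.
have hDD := mulr_ge0 Dv0 Dv0.
nra.
Qed.

End main.


Theorem lemma4 (R : realType) :
  exists K1 : R, 0 < K1 /\ K1 <= 20480 /\
  forall (d : measure_display) (T : measurableType d) (P : probability T R)
         (X Y : {RV P >-> R}),
    independent_RV P X Y ->
    (X : T -> R) \in Lfun P 2%:E -> (Y : T -> R) \in Lfun P 2%:E ->
    let E := fine 'E_P[X \+ Y] in
    let V := fine 'V_P[X \+ Y] in
    0 < V + E ^+ 2 ->
    V * Num.min (fine 'V_P[X]) (fine 'V_P[Y]) / (K1 * (V + E ^+ 2))
      <= fine 'V_P[(fun x => `|X x + Y x|)].
Proof.
exists 576; split; first lra.
split; first lra.
move=> d T P X Y hind X2 Y2.
exact: (@final R d T P X Y hind X2 Y2).
Qed.
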